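(* Let $T>0$, $N\ge1$, $p>1$, and let $F:[0,T]\times\mathbb{R}^N\to\mathbb{R}$ and $\delta>0$ be such that for a.e. $t$, $x\mapsto F(t,x)$ is continuously differentiable on $\{|x|\le\delta\}$. Assume: (H1) there exist constants $q_1>p^2$, $q_2\in(p^2,q_1)$, $M_1>0$, $M_2>0$ with $M_1|x|^{q_1}\le F(t,x)\le M_2|x|^{q_2}$ for all $|x|\le\delta$ and a.e. $t\in[0,T]$; (H2) there is $\beta>p^2$ with $0\le\beta F(t,x)\le(\nabla F(t,x),x)$ for all $|x|\le\delta$ and a.e. $t\in[0,T]$. Let $m\in C^1(\mathbb{R},[0,1])$ be even with $sm'(s)\le0$ for all $s$, $m(s)=1$ for $|s|\le\delta/2$ and $m(s)=0$ for $|s|\ge\delta$, and define $\bar F(t,x)=m(|x|)F(t,x)+(1-m(|x|))M_2|x|^{q_2}$. Let $\theta=\min\{q_2,\beta\}$. Then, for a.e. $t\in[0,T]$: (i) $0\le\bar F(t,x)\le M_2|x|^{q_2}$ for all $x\in\mathbb{R}^N$; (ii) $0<\theta\bar F(t,x)\le(\nabla\bar F(t,x),x)$ for all $x\in\mathbb{R}^N\setminus\{0\}$.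
   Context: $\nabla$ denotes the gradient in $x\in\mathbb{R}^N$ and $(\cdot,\cdot)$ the Euclidean inner product. *)

(* Defs.v *)
From HB Require Import structures.
From mathcomp Require Import all_boot all_order all_algebra.
From mathcomp Require Import all_classical all_reals all_analysis.
Set Implicit Arguments. Unset Strict Implicit. Unset Printing Implicit Defensive.
Import Order.TTheory GRing.Theory Num.Theory.
Import numFieldNormedType.Exports.
Local Open Scope ring_scope.

Definition dotv (R : realType) (N : nat) (u v : 'rV[R]_N) : R :=
  \sum_(i < N) u ord0 i * v ord0 i.

Definition enorm (R : realType) (N : nat) (x : 'rV[R]_N) : R :=
  Num.sqrt (dotv x x).

Definition evec (R : realType) (N : nat) (i : 'I_N) : 'rV[R]_N :=
  delta_mx ord0 i.

Definition grad (R : realType) (N : nat) (f : 'rV[R]_N -> R) (x : 'rV[R]_N)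
  : 'rV[R]_N := \row_(i < N) 'D_(evec R i) f x.

Definition Fbar (R : realType) (N : nat) (m : R -> R) (M2 q2 : R)
  (F : R -> 'rV[R]_N -> R) (t : R) (x : 'rV[R]_N) : R :=
  m (enorm x) * F t x + (1 - m (enorm x)) * (M2 * (enorm x `^ q2)).

(* Main.v *)
Require Import Defs.
From HB Require Import structures.
From mathcomp Require Import all_boot all_order all_algebra.
From mathcomp Require Import all_classical all_reals all_analysis.
From mathcomp Require Import ring lra.
Set Implicit Arguments. Unset Strict Implicit. Unset Printing Implicit Defensive.
Import Order.TTheory GRing.Theory Num.Theory.
Import numFieldNormedType.Exports.
Local Open Scope classical_set_scope.
Local Open Scope ring_scope.

Section H.
Variable R : realType.

Lemma dot_grad N (f : 'rV[R]_N -> R) x : differentiable f x ->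
  dotv (grad f x) x = 'D_x f x.
Proof.
move=> df; rewrite /dotv /grad.
under eq_bigr => i _ do rewrite mxE (deriveE _ df).
rewrite deriveE//.
transitivity ('d f x (\sum_(i<N) x ord0 i *: delta_mx ord0 i)); last first.
  by rewrite -row_sum_delta.
rewrite linear_sum; apply: eq_bigr => i _; rewrite linearZ /= /evec mulrC.
done.
Qed.

Lemma ray_quot (V : normedModType R) (f : V -> R) a v :
  (fun h : R => h^-1 *: (f (h *: v + a) - f a)) =
   (fun h : R => h^-1 *: ((fun s : R => f (s *: v + a)) (h *: 1 + 0) -
        (fun s : R => f (s *: v + a)) 0)).
Proof.
apply: funext => h /=.
rewrite addr0 [h *: 1]mulr1 ?scaler0 ?scale0r ?add0r /=. done.
Qed.

Lemma derive_ray (V : normedModType R) (f : V -> R) a v :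
  'D_v f a = 'D_1 (fun s : R => f (s *: v + a)) 0.
Proof. by rewrite /derive ray_quot. Qed.

Lemma derivable_ray (V : normedModType R) (f : V -> R) a v :
  derivable f a v <-> derivable (fun s : R => f (s *: v + a)) 0 1.
Proof. by rewrite /derivable ray_quot. Qed.

Lemma near_eq_differentiable (V W : normedModType R) (f g : V -> W) x :
  {near x, f =1 g} -> differentiable f x -> differentiable g x.
Proof.
move=> fg df.
have fgx : f x = g x by apply: (nbhs_singleton fg).
have key : g \o shift x = cst (g x) + 'd f x +o_ 0 id.
  apply/eqaddoP => eps eps0.
  have := diff_locally df => /eqaddoP/(_ eps eps0) H.
  have fg0 : \forall y \near 0, f (y + x) = g (y + x).
    by move: fg; rewrite (near_shift 0 x); apply: filterS => y /=; rewrite subr0.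
  move: H fg0; apply: filterS2 => y /=.
  rewrite /= !fctE /= fgx => H E. rewrite -E. exact H.
have dg := diff_unique (diff_continuous df) key.
apply/diff_locallyP; rewrite dg; split; [exact: diff_continuous df | exact: key].
Unshelve. all: by end_near. Qed.

End H.
Section H3.
Variable R : realType.
Variable N : nat.
Implicit Types x y : 'rV[R]_N.

Lemma dotv_ge0 x : 0 <= dotv x x.
Proof. by apply: sumr_ge0 => i _; exact: mulr_ge0_le0 || rewrite -expr2 sqr_ge0. Qed.

Lemma enorm_ge0 x : 0 <= enorm x.
Proof. exact: sqrtr_ge0. Qed.

Lemma enorm_gt0 x : x != 0 -> 0 < enorm x.
Proof.
move=> x0; rewrite lt_neqAle enorm_ge0 andbT; apply/eqP => /esym/eqP.
rewrite sqrtr_eq0 => h.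
have d0 : dotv x x = 0 by apply/eqP; rewrite eq_le h dotv_ge0.
move/eqP: x0; apply; apply/matrixP => i j; rewrite mxE ord1.
have sq : forall i : 'I_N, true -> 0 <= x ord0 i * x ord0 i.
  by move=> k _; rewrite -expr2 sqr_ge0.
have := psumr_eq0P sq d0 (i := j) isT.
by move/eqP; rewrite mulf_eq0 orbb => /eqP.
Qed.

Lemma enormE x : enorm x = dotv x x `^ 2^-1.
Proof. by rewrite powR12_sqrt ?dotv_ge0. Qed.

Lemma enorm_ray x s : enorm (s *: x + x) = `|s + 1| * enorm x.
Proof.
have -> : s *: x + x = (s + 1) *: x by rewrite scalerDl scale1r.
rewrite /enorm /dotv.
under eq_bigr => i _ do rewrite !mxE mulrACA.
rewrite -mulr_sumr sqrtrM ?sqr_ge0 // -expr2 sqrtr_sqr //.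
Qed.

Lemma dotv_differentiable x : differentiable (fun y => dotv y y) x.
Proof.
have -> : (fun y => dotv y y) = \sum_(i < N) (fun y : 'rV[R]_N => y ord0 i * y ord0 i).
  by rewrite fct_sumE.
apply: differentiable_sum => i.
by apply: differentiableM; exact: differentiable_coord.
Qed.

Lemma enorm_differentiable x : x != 0 -> differentiable (@enorm R N) x.
Proof.
move=> x0.
have -> : @enorm R N = (fun a : R => a `^ 2^-1) \o (fun y => dotv y y).
  by apply: funext => y; rewrite /= enormE.
apply: differentiable_comp; first exact: dotv_differentiable.
apply/derivable1_diffP; apply: derivable_powR.
rewrite in_itv /= andbT.
have := enorm_gt0 x0; rewrite /enorm sqrtr_gt0 //.
Qed.

End H3.
Section H4.
Variable R : realType.

Lemma aff_derive (c : R) : derivable (fun s : R => (s + 1) * c) 0 1 /\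
  'D_1 (fun s : R => (s + 1) * c) 0 = c.
Proof.
split; first by apply: derivableM.
by rewrite deriveMr // deriveD // derive_id derive_cst addr0 mulr1.
Qed.

Lemma comp_aff_derive (g : R -> R) (c : R) : derivable g c 1 ->
  derivable (fun s : R => g ((s + 1) * c)) 0 1 /\
  'D_1 (fun s : R => g ((s + 1) * c)) 0 = derive1 g c * c.
Proof.
move=> dg; have [da Da] := aff_derive c.
have e : (fun s : R => g ((s + 1) * c)) = g \o (fun s : R => (s + 1) * c) by [].
have dg' : derivable g ((fun s : R => (s + 1) * c) 0) 1 by rewrite /= add0r mul1r.
split.
  rewrite e; apply/derivable1_diffP; apply: differentiable_comp;
  by apply/derivable1_diffP.
by rewrite -derive1E e derive1_comp // [X in _ * X]derive1E Da add0r mul1r derive1E.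
Qed.

Lemma pp_derive (c q M : R) : 0 < c ->
  derivable (fun s : R => M * ((s + 1) * c) `^ q) 0 1 /\
  'D_1 (fun s : R => M * ((s + 1) * c) `^ q) 0 = q * (M * c `^ q).
Proof.
move=> c0.
have dp : derivable (@powR R ^~ q) c 1.
  by apply: derivable_powR; rewrite in_itv /= andbT.
have [d D] := comp_aff_derive dp.
split; first by apply: derivableM.
rewrite deriveMl // D powR_derive1 ?in_itv /= ?andbT //.
have cq : c `^ (q - 1) * c = c `^ q.
  rewrite -{2}(powRr1 (ltW c0)) -powRD ?subrK //.
  by apply/implyP => _; rewrite gt_eqF.
by rewrite -mulrA cq mulrCA.
Qed.

End H4.
Theorem lemma3p1 (R : realType) (T : R) (N : nat) (p : R)
  (F : R -> 'rV[R]_N -> R) (delta : R)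
  (q1 q2 M1 M2 beta : R) (m : R -> R) :
  0 < T -> (1 <= N)%N -> 1 < p -> 0 < delta ->
  (* C^1 regularity of F(t,.) on the closed ball of radius delta, for a.e. t *)
  {ae (@lebesgue_measure R), forall t, t \in `[0, T] ->
     (forall x : 'rV[R]_N, enorm x <= delta -> differentiable (F t) x) /\
     (forall i : 'I_N, {within [set x : 'rV[R]_N | enorm x <= delta],
         continuous (fun x => grad (F t) x ord0 i)})} ->
  (* (H1) *)
  p ^+ 2 < q2 -> q2 < q1 -> 0 < M1 -> 0 < M2 ->
  {ae (@lebesgue_measure R), forall t, t \in `[0, T] ->
     forall x : 'rV[R]_N, enorm x <= delta ->
       M1 * (enorm x `^ q1) <= F t x <= M2 * (enorm x `^ q2)} ->
  (* (H2) *)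
  p ^+ 2 < beta ->
  {ae (@lebesgue_measure R), forall t, t \in `[0, T] ->
     forall x : 'rV[R]_N, enorm x <= delta ->
       0 <= beta * F t x <= dotv (grad (F t) x) x} ->
  (* the cut-off function m *)
  (forall s, derivable m s 1) -> continuous (derive1 m) ->
  (forall s, 0 <= m s <= 1) ->
  (forall s, m (- s) = m s) ->
  (forall s, s * derive1 m s <= 0) ->
  (forall s, `|s| <= delta / 2 -> m s = 1) ->
  (forall s, delta <= `|s| -> m s = 0) ->
  let theta := Num.min q2 beta in
  {ae (@lebesgue_measure R), forall t, t \in `[0, T] ->
     (forall x : 'rV[R]_N,
        0 <= Fbar m M2 q2 F t x <= M2 * (enorm x `^ q2)) /\
     (forall x : 'rV[R]_N, x != 0 ->
        differentiable (Fbar m M2 q2 F t) x /\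
        0 < theta * Fbar m M2 q2 F t x <= dotv (grad (Fbar m M2 q2 F t) x) x)}.
Proof.
move=> T0 N1 p1 d0 Hreg q2p q21 M10 M20 H1 bp H2 mder mcont m01 mev mdec m1 m0 theta.
have HF : Filter (almost_everywhere (@lebesgue_measure R)) by exact: ae_filter_ringOfSetsType.
apply: (filterS3 HF _ Hreg H1 H2) => t Hr Hb Hg tT.
have {Hr}[dF _] := Hr tT.
have {}Hb := Hb tT; have {}Hg := Hg tT.
have p21 : 1 < p ^+ 2 by rewrite expr2; nra.
have q20 : 0 < q2 by lra.
have b0 : 0 < beta by lra.
have th0 : 0 < theta by rewrite /theta lt_min q20 b0.
have thq : theta <= q2 by rewrite /theta ge_min lexx.
have thb : theta <= beta by rewrite /theta ge_min lexx orbT.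
have mz : forall u, delta <= u -> m u = 0.
  by move=> u du; apply: m0; rewrite ger0_norm // (le_trans (ltW d0)).
have P0 : forall y : 'rV[R]_N, 0 <= M2 * enorm y `^ q2.
  by move=> y; rewrite mulr_ge0 ?powR_ge0 // ltW.
have Fb : forall y : 'rV[R]_N, enorm y <= delta -> 0 <= F t y <= M2 * enorm y `^ q2.
  move=> y yd; have /andP[lo hi] := Hb y yd; rewrite hi andbT.
  by apply: le_trans lo; rewrite mulr_ge0 ?powR_ge0 // ltW.
split.
  move=> x; rewrite /Fbar.
  have /andP[ma mb] := m01 (enorm x).
  have P0x := P0 x.
  have [xd|xd] := leP (enorm x) delta.
    have /andP[f0 fP] := Fb x xd.
    apply/andP; split; nra.
  by rewrite (mz _ (ltW xd)) mul0r add0r subr0 mul1r lexx andbT.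
move=> x x0.
have c0 := enorm_gt0 x0.
have de := enorm_differentiable x0.
have dm : forall s, differentiable m s by move=> s; apply/derivable1_diffP.
have dpow : differentiable (fun y : 'rV[R]_N => M2 * enorm y `^ q2) x.
  apply: differentiableM; first exact: differentiable_cst.
  apply: (@differentiable_comp _ _ _ _ (@enorm R N) (fun a => a `^ q2)) => //.
  by apply/derivable1_diffP; apply: derivable_powR; rewrite in_itv /= andbT.
have near1 : \forall s \near (0 : R), 0 <= s + 1.
  apply: filterS (nbhs0_lt (V := R^o) ltr01) => s.
  by rewrite ltr_norml => /andP[h _]; lra.
have [dpp Dpp] := pp_derive q2 M2 c0.
have DP : 'D_x (fun y : 'rV[R]_N => M2 * enorm y `^ q2) x = q2 * (M2 * enorm x `^ q2).
  rewrite derive_ray -Dpp; apply: near_eq_derive.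
  apply: filterS near1 => s s1 /=.
  by rewrite enorm_ray ger0_norm.
have Ppos : 0 < M2 * enorm x `^ q2 by rewrite mulr_gt0 // powR_gt0.
have [xd|xd] := leP (enorm x) delta; last first.
  have nb : \forall y \near x, delta < enorm y :=
    @cvgr_gt R _ (nbhs x) (nbhs_filter x) _ (enorm x) (differentiable_continuous de) delta xd.
  have ne : \forall y \near x, Fbar m M2 q2 F t y = M2 * enorm y `^ q2.
    near=> y.
    have yd : delta < enorm y by near: y.
    by rewrite /Fbar (mz _ (ltW yd)) mul0r add0r subr0 mul1r.
  have dFb : differentiable (Fbar m M2 q2 F t) x.
    apply: (near_eq_differentiable _ dpow); near=> y.
    have -> // : Fbar m M2 q2 F t y = M2 * enorm y `^ q2 by near: y.
  split => //.
  rewrite dot_grad //.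
  have -> : 'D_x (Fbar m M2 q2 F t) x = 'D_x (fun y => M2 * enorm y `^ q2) x.
    by apply: near_eq_derive.
  rewrite DP (nbhs_singleton ne) mulr_gt0 //=.
  by rewrite ler_wpM2r // ltW.
have dFt := dF x xd.
have FbE : Fbar m M2 q2 F t = (m \o @enorm R N) * F t +
   (cst 1 - m \o @enorm R N) * (fun y => M2 * enorm y `^ q2) by [].
have dFb : differentiable (Fbar m M2 q2 F t) x.
  rewrite FbE; apply: differentiableD; apply: differentiableM => //.
  - exact: differentiable_comp.
  - apply: differentiableB => //; exact: differentiable_comp.
split => //.
rewrite dot_grad // derive_ray.
set a := fun s : R => m ((s + 1) * enorm x).
set b := fun s : R => F t (s *: x + x).
set pp := fun s : R => M2 * ((s + 1) * enorm x) `^ q2.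
have -> : 'D_1 (fun s : R => Fbar m M2 q2 F t (s *: x + x)) 0 =
    'D_1 (a * b + (cst 1 - a) * pp : R -> R) 0.
  apply: near_eq_derive; near=> s.
  have s1 : 0 <= s + 1 by near: s.
  by rewrite /Fbar enorm_ray ger0_norm.
have [da Da] := comp_aff_derive (mder (enorm x)).
have db : derivable b 0 1 by apply: (derivable_ray (F t) x x).1; exact: diff_derivable.
have Db : 'D_1 b 0 = 'D_x (F t) x by rewrite [RHS]derive_ray.
have dc : derivable (cst (1:R)) (0:R) 1 := derivable_cst _ _ _.
have d1a : derivable (cst 1 - a) 0 1 := derivableB dc da.
have dab : derivable (a * b) 0 1 := derivableM da db.
have dap : derivable ((cst 1 - a) * pp) 0 1 := derivableM d1a dpp.
rewrite (deriveD dab dap) (deriveM da db) (deriveM d1a dpp) (deriveB dc da).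
rewrite derive_cst Db /a /b /pp Da Dpp /=.
have e1 : forall u v : R, u *: v = u * v by [].
rewrite !e1 add0r mul1r scale0r add0r /Fbar.
have HD0 : beta * F t x <= 'D_x (F t) x.
  by rewrite -(dot_grad dFt); case/andP: (Hg x xd).
have /andP[f0 fP] := Fb x xd.
have /andP[lo _] := Hb x xd.
have fpos : 0 < F t x.
  by apply: lt_le_trans lo; rewrite mulr_gt0 // powR_gt0.
have /andP[ma mb] := m01 (enorm x).
have mdc := mdec (enorm x).
set c := enorm x in mdc fP Ppos fpos lo ma mb *.
set f := F t x in HD0 f0 fP fpos lo *.
set D := 'D_x (F t) x in HD0 *.
set md := derive1 m c in mdc *.
set P := M2 * c `^ q2 in fP Ppos *.
set mc := m c in ma mb *.
have h1 : 0 <= (f - P) * (c * md) by apply: mulr_le0 => //; lra.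
have h2 : 0 <= mc * (D - theta * f).
  apply: mulr_ge0 => //; have : theta * f <= beta * f by rewrite ler_wpM2r.
  lra.
have h3 : 0 <= (1 - mc) * ((q2 - theta) * P).
  by apply: mulr_ge0; [lra | apply: mulr_ge0; lra].
have h4 : 0 <= (1 - mc) * (P - f) by apply: mulr_ge0; lra.
have e2 : (cst 1 - (fun s : R => m ((s + 1) * c))) 0 = 1 - mc.
  by rewrite !fctE /= add0r mul1r.
rewrite e2.
apply/andP; split.
  apply: mulr_gt0 => //; nra.
nra.
Unshelve. all: by end_near. Qed.
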